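(* Let $A\in\mathbb{R}^{m\times n}$ have full row rank, $c\in\mathbb{R}^m$, and fix a block size $\tau$ with $m+1\le\tau\le n$; let $\mathcal{B}$ be the set of all subsets $b\subseteq\{1,\dots,n\}$ with $|b|=\tau$. Consider $\min\{F(x):=f(x)+h(x): Ax=c\}$, where $f:\mathbb{R}^n\to\mathbb{R}$ is differentiable and $h(x)=\sum_i h_i(x_i)$ with each $h_i:\mathbb{R}\to\mathbb{R}\cup\{+\infty\}$ proper and convex. Assume there is $L_2>0$ such that for every $x$ with $Ax=c$, every $b\in\mathcal{B}$ and every $d$ with $\mathrm{supp}(d)\subseteq b$ and $Ad=0$, $\|\nabla_b f(x+d)-\nabla_bf(x)\|_2\le L_2\|d\|_2$. Let $F^*=\inf\{F(x):Ax=c\}$ and assume there is $\mu_2>0$ such that for all $x$ with $Ax=c$, $h(x)<\infty$, \[ -L_2\min_{d:\ Ad=0}\Big\{\nabla f(x)^\top d+\tfrac{L_2}{2}\|d\|_2^2+h(x+d)-h(x)\Big\}\ge\mu_2\,(F(x)-F^* ). \] Let $x^0$ satisfy $Ax^0=c$, $h(x^0)<\infty$, and set $x^{k+1}=x^k+d^k$ where $(b^k,d^k)$ minimizes $\nabla f(x^k)^\top d+\frac{L_2}{2}\|d\|_2^2+h(x^k+d)-h(x^k)$ over all $b\in\mathcal{B}$ and all $d$ with $\mathrm{supp}(d)\subseteq b$ and $Ad=0$ (the GS-q rule). Then for all $k\ge0$, \[ F(x^k)-F^*\le\Big(1-\frac{\mu_2}{L_2(n-\tau+1)}\Big)^k\big(F(x^0)-F^*\big).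 \]
   Context: $\mathrm{supp}(d)=\{i:d_i\ne0\}$; $\nabla_b f$ denotes the vector of partial derivatives of $f$ with indices in $b$. The displayed assumption on $\mu_2$ is the proximal-PL condition in the 2-norm, $\frac12\mathcal{D}(x,L_2)\ge\mu_2(F(x)-F^* )$ with $\mathcal{D}(x,L)=-2L\min_{d:Ad=0}\{\nabla f(x)^\top d+\frac L2\|d\|_2^2+h(x+d)-h(x)\}$. *)

(* Defs.v *)
From HB Require Import structures.
From mathcomp Require Import all_boot all_order all_algebra.
From mathcomp Require Import all_classical all_reals all_analysis.
Set Implicit Arguments. Unset Strict Implicit. Unset Printing Implicit Defensive.
Import Order.TTheory GRing.Theory Num.Theory.
Import numFieldNormedType.Exports.
Local Open Scope classical_set_scope.
Local Open Scope ring_scope.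

Section Defs.
Variable R : realType.

Definition norm2 (n : nat) (v : 'cV[R]_n) : R := Num.sqrt (\sum_i v i 0 ^+ 2).

Definition norm2_on (n : nat) (b : {set 'I_n}) (v : 'cV[R]_n) : R :=
  Num.sqrt (\sum_(i in b) v i 0 ^+ 2).

Definition grad (n : nat) (f : 'cV[R]_n -> R) (x : 'cV[R]_n) : 'cV[R]_n :=
  \col_i ('d f x (delta_mx i 0 : 'cV[R]_n)).

Definition dotv (n : nat) (u v : 'cV[R]_n) : R := \sum_i u i 0 * v i 0.

Definition supp_sub (n : nat) (d : 'cV[R]_n) (b : {set 'I_n}) : Prop :=
  forall i, d i 0 != 0 -> i \in b.

Definition econvex (g : R -> \bar R) : Prop :=
  forall (x y t : R), 0 < t < 1 ->
    (g (t * x + (1 - t) * y)%R <= t%:E * g x + (1 - t)%:E * g y)%E.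

Definition eproper (g : R -> \bar R) : Prop :=
  (forall x, g x != -oo)%E /\ (exists x, g x < +oo)%E.

Definition hsep (n : nat) (hi : 'I_n -> R -> \bar R) (x : 'cV[R]_n) : \bar R :=
  (\sum_(i < n) hi i (x i ord0))%E.

Definition Fobj (n : nat) (f : 'cV[R]_n -> R) (hi : 'I_n -> R -> \bar R)
  (x : 'cV[R]_n) : \bar R := ((f x)%:E + hsep hi x)%E.

Definition Fstar (m n : nat) (A : 'M[R]_(m, n)) (c : 'cV[R]_m)
  (f : 'cV[R]_n -> R) (hi : 'I_n -> R -> \bar R) : \bar R :=
  ereal_inf [set Fobj f hi x | x in [set x | A *m x = c]].

Definition Qmodel (n : nat) (f : 'cV[R]_n -> R) (hi : 'I_n -> R -> \bar R)
  (L : R) (x d : 'cV[R]_n) : \bar R :=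
  ((dotv (grad f x) d + L / 2 * norm2 d ^+ 2)%:E + hsep hi (x + d) - hsep hi x)%E.

End Defs.

(* Main.v *)
Require Import Defs.
From HB Require Import structures.
From mathcomp Require Import all_boot all_order all_algebra.
From mathcomp Require Import all_classical all_reals all_analysis.
From mathcomp Require Import ring lra zify.
Import Order.TTheory GRing.Theory Num.Theory.
Import numFieldNormedType.Exports.
Local Open Scope classical_set_scope.
Local Open Scope ring_scope.
Set Implicit Arguments. Unset Strict Implicit. Unset Printing Implicit Defensive.

Lemma mxB (R : realType) n (u v : 'cV[R]_n) i : (u - v) i 0 = u i 0 - v i 0.
Proof. by rewrite !mxE. Qed.

Lemma mxZ (R : realType) n (u : 'cV[R]_n) (k : R) i : (k *: u) i 0 = k * u i 0.
Proof. by rewrite !mxE. Qed.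

Lemma dotv_d (R : realType) n (f : 'cV[R]_n -> R) z v :
  dotv (grad f z) v = 'd f z v.
Proof.
rewrite {2}(matrix_sum_delta v) linear_sum /dotv; apply: eq_bigr => i _.
by rewrite big_ord1 linearZ /= mxE mulrC.
Qed.

Lemma phi_der (R : realType) n (f : 'cV[R]_n -> R) (x d : 'cV[R]_n) (t : R) :
  (forall z, differentiable f z) ->
  is_derive t (1:R) (fun s : R => f (x + s *: d)) (dotv (grad f (x + t *: d)) d).
Proof.
move=> df.
pose g := (cst x) + ( *:%R ^~ d) : R -> 'cV[R]_n.
have dg : is_diff t g (cst 0 + ( *:%R ^~ d)).
  exact: is_diffD.
have gd : differentiable g t by case: dg.
have -> : (fun s : R => f (x + s *: d)) = f \o g by [].
have dfg : differentiable (f \o g) t.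
  by apply: differentiable_comp => //; exact: df.
apply: DeriveDef; first exact: diff_derivable.
rewrite deriveE // diff_comp //.
by rewrite /= diff_val /= add0r scale1r dotv_d.
Qed.
Lemma norm2_sq (R : realType) n (v : 'cV[R]_n) : norm2 v ^+ 2 = \sum_i v i 0 ^+ 2.
Proof. by rewrite /norm2 sqr_sqrtr // sumr_ge0 // => i _; rewrite sqr_ge0. Qed.

Lemma norm2_onsq (R : realType) n B (v : 'cV[R]_n) : norm2_on B v ^+ 2 = \sum_(i in B) v i 0 ^+ 2.
Proof. by rewrite /norm2_on sqr_sqrtr // sumr_ge0 // => i _; rewrite sqr_ge0. Qed.

Lemma norm2_ge0 (R : realType) n (v : 'cV[R]_n) : 0 <= norm2 v.
Proof. exact: sqrtr_ge0. Qed.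

Lemma norm2_on_ge0 (R : realType) n B (v : 'cV[R]_n) : 0 <= norm2_on B v.
Proof. exact: sqrtr_ge0. Qed.

Lemma key_ineq (R : realType) n (B : {set 'I_n}) (g d : 'cV[R]_n) (M : R) :
  0 < M -> supp_sub d B -> norm2_on B g ^+ 2 <= M ^+ 2 * norm2 d ^+ 2 ->
  dotv g d <= M * norm2 d ^+ 2.
Proof.
move=> M0 sd; rewrite norm2_onsq norm2_sq => hG.
have -> : dotv g d = \sum_(i in B) g i 0 * d i 0.
  rewrite /dotv [RHS]big_mkcond /=; apply: eq_bigr => i _.
  case: ifP => // iB; have : ~~ (d i 0 != 0) by apply/negP => /sd; rewrite iB.
  by rewrite negbK => /eqP ->; rewrite mulr0.
have Sle : \sum_(i in B) d i 0 ^+ 2 <= \sum_i d i 0 ^+ 2.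
  rewrite [X in _ <= X](bigID (fun i => i \in B)) /= lerDl sumr_ge0 // => i _.
  exact: sqr_ge0.
apply: (@le_trans _ _ (\sum_(i in B) (g i 0 ^+ 2 / (2 * M) + M / 2 * d i 0 ^+ 2))).
  apply: ler_sum => i _.
  have h : 0 <= (g i 0 - M * d i 0) ^+ 2 / (2 * M).
    by rewrite divr_ge0 ?sqr_ge0 // mulr_ge0 // ltW.
  move: h; set a := g i 0; set b := d i 0.
  have -> : (a - M * b) ^+ 2 / (2 * M) = a ^+ 2 / (2 * M) + M / 2 * b ^+ 2 - a * b.
    by field; rewrite gt_eqF.
  by rewrite subr_ge0.
rewrite big_split /= -mulr_suml -mulr_sumr.
have h1 : (\sum_(i in B) g i 0 ^+ 2) / (2 * M) <= M / 2 * \sum_i d i 0 ^+ 2.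
  rewrite ler_pdivrMr ?mulr_gt0 //.
  apply: (le_trans hG); rewrite le_eqVlt; apply/orP; left; apply/eqP; by field.
have h2 : M / 2 * \sum_(i in B) d i 0 ^+ 2 <= M / 2 * \sum_i d i 0 ^+ 2.
  by rewrite ler_pM2l // divr_gt0.
lra.
Qed.

Lemma descent (R : realType) n (f : 'cV[R]_n -> R) (L : R) (x d : 'cV[R]_n)
  (B : {set 'I_n}) :
  (forall z, differentiable f z) -> 0 < L -> supp_sub d B ->
  (forall s, 0 < s -> s < 1 ->
     norm2_on B (grad f (x + s *: d) - grad f x) <= L * norm2 (s *: d)) ->
  f (x + d) <= f x + dotv (grad f x) d + L / 2 * norm2 d ^+ 2.
Proof.
move=> df L0 sd lip.
set a := dotv (grad f x) d; set S := norm2 d ^+ 2.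
pose psi := fun s : R => f (x + s *: d) - a * s - (L / 2 * S) * s ^+ 2.
pose dpsi := fun s : R => dotv (grad f (x + s *: d)) d - a - L * S * s.
have hd : forall s, is_derive s (1:R) psi (dpsi s).
  move=> s.
  have -> : psi = (fun s : R => f (x + s *: d)) - a *: id - (L / 2 * S) *: (id ^+ 2).
    by apply: funext => r.
  apply: is_derive_eq.
    apply: is_deriveB; first apply: is_deriveB.
    exact: phi_der.
  by rewrite /dpsi /= expr1 /GRing.scale /=; field.
have cont : {within `[0, 1], continuous psi}.
  apply: continuous_subspaceT => r.
  have hr : differentiable psi r by apply/derivable1_diffP; case: (hd r).
  exact: (differentiable_continuous hr).
have [c c01 E] := MVT (f := psi) (df := dpsi) (@ltr01 R) (fun r _ => hd r) cont.
move: c01; rewrite in_itv /= => /andP [c0 c1].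
have hdot : dotv (grad f (x + c *: d)) d - dotv (grad f x) d =
            dotv (grad f (x + c *: d) - grad f x) d.
  by rewrite /dotv -sumrB; apply: eq_bigr => i _; rewrite mxB mulrBl.
have nc : norm2 (c *: d) = c * norm2 d.
  rewrite /norm2 -[X in X * _](@ger0_norm _ c) ?ltW // -sqrtr_sqr -sqrtrM ?sqr_ge0 //.
  by congr Num.sqrt; rewrite mulr_sumr; apply: eq_bigr => i _; rewrite mxZ exprMn.
have dle : dpsi c <= 0.
  rewrite /dpsi /a hdot subr_le0 (_ : L * S * c = L * c * norm2 d ^+ 2); last by rewrite /S; ring.
  apply: (@key_ineq _ _ B) => //; first exact: mulr_gt0.
  have h := lip c c0 c1.
  rewrite nc in h.
  rewrite -exprMn ler_sqr ?nnegrE; first by rewrite -mulrA.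
  - exact: norm2_on_ge0.
  - by rewrite mulr_ge0 ?norm2_ge0 // mulr_ge0 // ltW.
have e1 : psi 1 = f (x + d) - a - L / 2 * S by rewrite /psi scale1r expr1n !mulr1.
have e0 : psi 0 = f x by rewrite /psi scale0r addr0 expr0n /= !mulr0 !subr0.
have h : psi 1 - psi 0 <= 0 by rewrite E subr0 mulr1.
move: h; rewrite e1 e0 subr_le0 !lerBlDr.
by rewrite addrAC.
Qed.
Lemma conv_aux (R : realType) (g : R -> \bar R) (a b c : R) :
  eproper g /\ econvex g -> 0 < b * c ->
  (g (a + b)%R + g (a + c)%R <= g (a + b + c)%R + g a)%E.
Proof.
move=> [[gN _] gc] bc.
have [Hy|Hfin] := eqVneq (g (a + b + c)) +oo%E.
  by rewrite Hy addye ?gN // leey.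
have [Hy0|Hfin0] := eqVneq (g a) +oo%E.
  by rewrite Hy0 addey ?gN // leey.
have fH : g (a + b + c) \is a fin_num by rewrite fin_numE gN Hfin.
have f0 : g a \is a fin_num by rewrite fin_numE gN Hfin0.
have bc0 : b + c != 0.
  have [b0|b0] := ltP 0 b.
    have c0 : 0 < c by rewrite -(pmulr_rgt0 _ b0).
    by rewrite gt_eqF // addr_gt0.
  have b0' : b < 0.
    by rewrite lt_neqAle b0 andbT; apply/eqP => b0'; move: bc; rewrite b0' mul0r ltxx.
  have c0 : c < 0 by rewrite -(nmulr_rgt0 _ b0').
  by rewrite lt_eqF //; lra.
set t := b / (b + c).
have t01 : 0 < t < 1.
  have e1 : 1 - t = c / (b + c) by rewrite /t; field.
  have [b0|b0] := ltP 0 b.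
    have c0 : 0 < c by rewrite -(pmulr_rgt0 _ b0).
    apply/andP; split; first by rewrite divr_gt0 ?addr_gt0.
    by rewrite -subr_gt0 e1 divr_gt0 // addr_gt0.
  have b0' : b < 0.
    by rewrite lt_neqAle b0 andbT; apply/eqP => b0'; move: bc; rewrite b0' mul0r ltxx.
  have c0 : c < 0 by rewrite -(nmulr_rgt0 _ b0').
  have bc' : b + c < 0 by lra.
  apply/andP; split; first by rewrite /t -divrNN divr_gt0 ?oppr_gt0.
  by rewrite -subr_gt0 e1 -divrNN divr_gt0 ?oppr_gt0.
have t01' : 0 < 1 - t < 1.
  by move: t01 => /andP [? ?]; apply/andP; split; lra.
have h1 := gc (a + b + c) a t t01.
have h2 := gc (a + b + c) a (1 - t) t01'.
have E1 : t * (a + b + c) + (1 - t) * a = a + b by rewrite /t; field.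
have E2 : (1 - t) * (a + b + c) + (1 - (1 - t)) * a = a + c by rewrite /t; field.
rewrite E1 in h1; rewrite E2 in h2.
apply: (le_trans (leeD h1 h2)).
rewrite -(fineK fH) -(fineK f0) -!EFinM -!EFinD lee_fin.
by rewrite le_eqVlt; apply/orP; left; apply/eqP; ring.
Qed.

Lemma mxD' (R : realType) n (u v : 'cV[R]_n) i : (u + v) i 0 = u i 0 + v i 0.
Proof. by rewrite !mxE. Qed.

Lemma hsep_super (R : realType) n (hi : 'I_n -> R -> \bar R) (x y z : 'cV[R]_n) :
  (forall i, eproper (hi i) /\ econvex (hi i)) ->
  (forall i, 0 <= y i 0 * z i 0) ->
  (hsep hi (x + y) + hsep hi (x + z) <= hsep hi (x + y + z) + hsep hi x)%E.
Proof.
move=> hp yz; rewrite /hsep -!big_split /=; apply: lee_sum => i _.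
rewrite !mxD'.
have [y0|y0] := eqVneq (y i 0) 0.
  by rewrite y0 addr0 addeC.
have [z0|z0] := eqVneq (z i 0) 0.
  by rewrite z0 !addr0.
apply: conv_aux => //.
by rewrite lt_def yz andbT mulf_neq0.
Qed.

Lemma hsep_Nninf (R : realType) n (hi : 'I_n -> R -> \bar R) (x : 'cV[R]_n) :
  (forall i, eproper (hi i) /\ econvex (hi i)) -> hsep hi x != -oo%E.
Proof.
move=> hp; rewrite /hsep; elim/big_ind: _ => //.
move=> a b; case: a => [a| |] // _; case: b => [b| |] //.
by move=> i _; case: (hp i) => [[]].
Qed.

Lemma ext_ineq (R : realType) (Hy Hz Hyz : \bar R) (h0 ly lz lyz : R) :
  Hy != -oo%E -> Hz != -oo%E -> Hyz != -oo%E ->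
  (Hy + Hz <= Hyz + h0%:E)%E -> ly + lz <= lyz ->
  ((ly%:E + Hy - h0%:E) + (lz%:E + Hz - h0%:E) <= lyz%:E + Hyz - h0%:E)%E.
Proof.
move=> Hyn Hzn Hyzn.
case: Hyz Hyzn => [c| |] // _; last first.
  by move=> *; rewrite /= leey.
case: Hy Hyn => [a| |] // _; case: Hz Hzn => [b| |] // _ /=.
- rewrite -!EFinD !lee_fin => h1 h2; lra.
Qed.

Lemma norm2_sq' (R : realType) n (v : 'cV[R]_n) : norm2 v ^+ 2 = \sum_i v i 0 ^+ 2.
Proof. by rewrite /norm2 sqr_sqrtr // sumr_ge0 // => i _; rewrite sqr_ge0. Qed.

Lemma Q_super (R : realType) n (f : 'cV[R]_n -> R) (hi : 'I_n -> R -> \bar R) (L : R)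
  (x y z : 'cV[R]_n) :
  (forall i, eproper (hi i) /\ econvex (hi i)) -> hsep hi x \is a fin_num -> 0 <= L ->
  (forall i, 0 <= y i 0 * z i 0) ->
  (Qmodel f hi L x y + Qmodel f hi L x z <= Qmodel f hi L x (y + z))%E.
Proof.
move=> hp hx L0 yz; rewrite /Qmodel -(fineK hx).
apply: ext_ineq; try exact: hsep_Nninf.
  by rewrite addrA fineK //; exact: hsep_super.
have ed : dotv (grad f x) (y + z) = dotv (grad f x) y + dotv (grad f x) z.
  by rewrite /dotv -big_split; apply: eq_bigr => i _; rewrite mxD' mulrDr.
have en : norm2 y ^+ 2 + norm2 z ^+ 2 <= norm2 (y + z) ^+ 2.
  rewrite !norm2_sq' -big_split; apply: ler_sum => i _; rewrite mxD'.
  have := yz i; set a := y i 0; set b := z i 0; move=> h; rewrite /= sqrrD mulr2n; lra.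
rewrite ed.
have : L / 2 * (norm2 y ^+ 2 + norm2 z ^+ 2) <= L / 2 * norm2 (y + z) ^+ 2.
  by rewrite ler_wpM2l // divr_ge0.
move: en; set N1 := norm2 y ^+ 2; set N2 := norm2 z ^+ 2; set N3 := norm2 (y + z) ^+ 2.
move=> _ h; lra.
Qed.
Lemma ker_small (R : realType) m n (A : 'M[R]_(m, n)) (T : {set 'I_n}) :
  (m < #|T|)%N ->
  exists u : 'cV[R]_n, u != 0 /\ A *m u = 0 /\ forall i, u i 0 != 0 -> i \in T.
Proof.
move=> mT.
pose E : 'M[R]_(#|T|, n) := \matrix_(j, i) (i == enum_val j)%:R.
pose K := E *m A^T.
have rk : (0 < \rank (kermx K))%N.
  rewrite mxrank_ker subn_gt0; apply: leq_trans mT; apply: leq_ltn_trans (rank_leq_col K) _.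
  by [].
have [i [j kij]] : exists i j, kermx K i j != 0.
  apply: contrapT => H; move: rk; rewrite lt0n mxrank_eq0; apply/negP/negPn/eqP.
  apply/matrixP => i j; apply: contrapT => hij; apply: H; exists i, j.
  by apply/eqP => e; apply: hij; rewrite e [RHS]mxE.
set w := row i (kermx K).
have wK : w *m K = 0 by rewrite /w -row_mul mulmx_ker row0.
exists (w *m E)^T; split; last split.
- apply/negP => /eqP/matrixP/(_ (enum_val j) 0).
  rewrite !mxE (bigD1 j) //= big1 ?addr0.
    rewrite /E mxE [X in _ * X]mxE eqxx mulr1; exact/eqP.
  move=> k kj; rewrite /E [X in _ * X]mxE.
  have [ekj|] := eqVneq (enum_val j) (enum_val k); last by rewrite mulr0.
  by move/enum_val_inj: ekj => ekj; rewrite ekj eqxx in kj.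
- have -> : A *m (w *m E)^T = (w *m K)^T by rewrite /K !trmx_mul trmxK mulmxA.
  by rewrite wK trmx0.
- move=> k; rewrite !mxE; apply: contraNT => kT; apply/eqP; apply: big1 => l _.
  rewrite [X in _ * X]mxE.
  have [ekl|] := eqVneq k (enum_val l); last by rewrite mulr0.
  by move: kT; rewrite ekl enum_valP.
Qed.

Local Close Scope classical_set_scope.

Lemma sub_card (T : finType) (D : {set T}) k :
  (k <= #|D|)%N -> exists S : {set T}, S \subset D /\ #|S| = k.
Proof.
elim: k => [|k IH] hk; first by exists (@finset.set0 T); rewrite finset.sub0set cards0.
have [S [SD cS]] := IH (ltnW hk).
have : (0 < #|D :\: S|)%N by rewrite cardsD (finset.setIidPr SD) cS subn_gt0.
case/card_gt0P => x; rewrite inE => /andP [xS xD].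
exists (x |: S); split; first by rewrite finset.subUset finset.sub1set xD SD.
by rewrite cardsU1 xS cS.
Qed.

Lemma super_card (T : finType) (S : {set T}) k :
  (#|S| <= k)%N -> (k <= #|T|)%N -> exists B : {set T}, S \subset B /\ #|B| = k.
Proof.
elim: k => [|k IH] hS hk.
  by exists S; split => //; apply/eqP; rewrite -leqn0.
case: (ltngtP #|S| k.+1) hS => // [lt _|eq _]; last by exists S.
have [B [SB cB]] := IH lt (ltnW hk).
have : (0 < #|~: B|)%N by rewrite cardsCs finset.setCK cB subn_gt0.
case/card_gt0P => x; rewrite inE => xB.
exists (x |: B); split; first by apply: fintype.subset_trans SB (finset.subsetUr _ _).
by rewrite cardsU1 xB cB.
Qed.

Lemma reduce (R : realType) n (d u : 'cV[R]_n) i0 :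
  0 < u i0 0 * d i0 0 ->
  exists t, exists j, 0 < t /\ d j 0 != 0 /\ d j 0 - t * u j 0 = 0 /\
    (forall i, 0 < u i 0 * d i 0 -> t * u i 0 ^+ 2 <= u i 0 * d i 0 /\
                                     t * (u i 0 * d i 0) <= d i 0 ^+ 2).
Proof.
move=> h0.
case: (@arg_minP _ _ 'I_n i0 (fun i => 0 < u i 0 * d i 0) (fun i => d i 0 / u i 0) h0).
move=> j hj jmin.
have uj : u j 0 != 0 by apply/negP => /eqP e; move: hj; rewrite e mul0r ltxx.
have dj : d j 0 != 0 by apply/negP => /eqP e; move: hj; rewrite e mulr0 ltxx.
exists (d j 0 / u j 0), j; split; last split; last split.
- have -> : d j 0 / u j 0 = (u j 0 * d j 0) / (u j 0 ^+ 2) by field.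
  by rewrite divr_gt0 // lt_def sqr_ge0 sqrf_eq0 uj.
- exact: dj.
- by field.
- move=> i hi; have := jmin i hi.
  have ui : u i 0 != 0 by apply/negP => /eqP e; move: hi; rewrite e mul0r ltxx.
  move=> le; split.
  + have u2 : 0 < u i 0 ^+ 2 by rewrite lt_def sqr_ge0 sqrf_eq0 ui.
    rewrite -(ler_pM2r u2) in le; apply: (le_trans le).
    by rewrite le_eqVlt; apply/orP; left; apply/eqP; field.
  + rewrite -(ler_pM2r hi) in le; apply: (le_trans le).
    by rewrite le_eqVlt; apply/orP; left; apply/eqP; field.
Qed.

Definition suppS {R : realType} {n : nat} (d : 'cV[R]_n) : {set 'I_n} := [set i | d i 0 != 0].

Lemma in_suppS (R : realType) n (d : 'cV[R]_n) i : (i \in suppS d) = (d i 0 != 0).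
Proof. by rewrite inE. Qed.

Lemma cV_neq0 (R : realType) n (v : 'cV[R]_n) : v != 0 -> exists i, v i 0 != 0.
Proof.
move=> v0; apply: contrapT => H; move/eqP: v0; apply; apply/matrixP => i j.
rewrite [j]ord1 [RHS]mxE; apply/eqP; apply: contrapT => hi; apply: H; exists i; exact/negP.
Qed.

Lemma mxB' (R : realType) n (u v : 'cV[R]_n) i : (u - v) i 0 = u i 0 - v i 0.
Proof. by rewrite !mxE. Qed.

Lemma mxZ' (R : realType) n (u : 'cV[R]_n) (k : R) i : (k *: u) i 0 = k * u i 0.
Proof. by rewrite !mxE. Qed.

Lemma elem (R : realType) m n (A : 'M[R]_(m, n)) tau (d : 'cV[R]_n) :
  (m < tau)%N -> A *m d = 0 -> d != 0 ->
  exists e : 'cV[R]_n, e != 0 /\ A *m e = 0 /\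
    (forall i, e i 0 != 0 -> 0 < e i 0 * d i 0) /\ (#|suppS e| <= tau)%N.
Proof.
move=> mt; move: {2}#|suppS d| (leqnn #|suppS d|) => s; elim: s d => [|s IH] d hs Ad d0.
  have [i di] := cV_neq0 d0.
  by move: hs; rewrite leqn0 cards_eq0 => /eqP/setP/(_ i); rewrite in_suppS di inE.
have [small|big] := leqP #|suppS d| tau.
  exists d; split => //; split => //; split => // i di.
  by rewrite lt_def sqr_ge0 mulf_neq0.
have [T [Td cT]] := sub_card (ltnW (leq_ltn_trans mt big) : (m.+1 <= #|suppS d|)%N).
have [u0 [u0n [Au0 u0T]]] := ker_small A (leq_trans (leqnn _) (eq_leq (esym cT))).
have [i0 ui0] := cV_neq0 u0n.
have di0 : d i0 0 != 0 by rewrite -in_suppS; apply: (fintype.subsetP Td); exact: u0T.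
have [u [Au [uT hu]]] : exists u : 'cV[R]_n, A *m u = 0 /\
    (forall i, u i 0 != 0 -> i \in T) /\ 0 < u i0 0 * d i0 0.
  have [pos|neg] := ltP 0 (u0 i0 0 * d i0 0); first by exists u0.
  exists (- u0); split; first by rewrite mulmxN Au0 oppr0.
  split; first by move=> i; rewrite mxE oppr_eq0; exact: u0T.
  rewrite mxE mulNr oppr_gt0 lt_neqAle neg andbT mulf_neq0 //.
have uS : forall i, d i 0 = 0 -> u i 0 = 0.
  move=> i di; apply: contra_eq (di) => ui.
  by rewrite -in_suppS; apply: (fintype.subsetP Td); exact: uT.
have [t [j [t0 [dj [zj tb]]]]] := reduce hu.
set d' := d - t *: u.
have Ad' : A *m d' = 0 by rewrite /d' mulmxBr -scalemxAr Au scaler0 subr0.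
have d'd : forall i, 0 <= d' i 0 * d i 0.
  move=> i; rewrite /d' mxB' mxZ'.
  have -> : (d i 0 - t * u i 0) * d i 0 = d i 0 ^+ 2 - t * (u i 0 * d i 0) by ring.
  have s2 := sqr_ge0 (d i 0).
  have [p|p] := ltP 0 (u i 0 * d i 0).
    have [_ h] := tb i p; lra.
  have : t * (u i 0 * d i 0) <= 0 by rewrite pmulr_rle0.
  lra.
have d'S : forall i, d i 0 = 0 -> d' i 0 = 0.
  by move=> i di; rewrite /d' mxB' mxZ' di (uS i di) mulr0 subr0.
have ltS : (#|suppS d'| < #|suppS d|)%N.
  apply: proper_card; apply/properP; split.
    apply/fintype.subsetP => i; rewrite !in_suppS; apply: contra_neq; exact: d'S.
  by exists j; rewrite !in_suppS // /d' mxB' mxZ' zj eqxx.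
have d'0 : d' != 0.
  apply/negP => /eqP e0.
  have : suppS d \subset T.
    apply/fintype.subsetP => i; rewrite in_suppS => di; apply: uT.
    have : d' i 0 = 0 by rewrite e0 mxE.
    rewrite /d' mxB' mxZ' => /eqP; rewrite subr_eq0 => /eqP ed.
    by move: di; rewrite ed mulf_eq0 negb_or => /andP [].
  move/subset_leq_card; rewrite cT => h.
  by move: (leq_ltn_trans (leq_trans h mt) big); rewrite ltnn.
have [e [e0 [Ae [he ce]]]] := IH d' (leq_trans ltS hs) Ad' d'0.
exists e; split => //; split => //; split => // i ei.
have p1 := he i ei.
have d'i : d' i 0 != 0 by apply: contraTneq p1 => ->; rewrite mulr0 ltxx.
have di : d i 0 != 0 by apply: contra_neq d'i; exact: d'S.
have p2 : 0 < d' i 0 * d i 0 by rewrite lt_def d'd mulf_neq0.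
have : 0 < (e i 0 * d' i 0) * (d' i 0 * d i 0) by rewrite mulr_gt0.
have -> : (e i 0 * d' i 0) * (d' i 0 * d i 0) = (e i 0 * d i 0) * (d' i 0 ^+ 2) by ring.
rewrite pmulr_lgt0 // lt_def sqr_ge0 sqrf_eq0 d'i //.
Qed.

Lemma peel (R : realType) m n (A : 'M[R]_(m, n)) tau (d : 'cV[R]_n) :
  (m < tau)%N -> A *m d = 0 -> (tau < #|suppS d|)%N ->
  exists y : 'cV[R]_n, A *m y = 0 /\ (#|suppS y| <= tau)%N /\
    (forall i, 0 <= y i 0 * (d - y) i 0) /\ (#|suppS (d - y)| < #|suppS d|)%N.
Proof.
move=> mt Ad big.
have d0 : d != 0.
  apply/negP => /eqP e0; move: big; rewrite e0.
  have -> : suppS (0 : 'cV[R]_n) = finset.set0.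
    by apply/setP => i; rewrite in_suppS mxE eqxx inE.
  by rewrite cards0.
have [e [e0 [Ae [he ce]]]] := elem mt Ad d0.
have [i0 ei0] := cV_neq0 e0.
have [t [j [t0 [dj [zj tb]]]]] := reduce (he i0 ei0).
exists (t *: e); split; first by rewrite -scalemxAr Ae scaler0.
split.
  apply: leq_trans ce; apply: subset_leq_card; apply/fintype.subsetP => i.
  by rewrite !in_suppS mxZ' mulf_eq0 negb_or => /andP [].
split.
  move=> i; rewrite mxB' !mxZ'.
  have [ei|ei] := eqVneq (e i 0) 0; first by rewrite ei !mulr0 mul0r.
  have [h _] := tb i (he i ei).
  have -> : t * e i 0 * (d i 0 - t * e i 0) = t * (e i 0 * d i 0 - t * e i 0 ^+ 2) by ring.
  by apply: mulr_ge0; [exact: ltW | rewrite subr_ge0].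
apply: proper_card; apply/properP; split.
  apply/fintype.subsetP => i; rewrite !in_suppS mxB' mxZ'; apply: contra_neq => di.
  have : e i 0 = 0.
    apply/eqP; apply: contraT => ei; have := he i ei; by rewrite di mulr0 ltxx.
  by move=> ->; rewrite di mulr0 subr0.
by exists j; rewrite !in_suppS // mxB' mxZ' zj eqxx.
Qed.

Lemma Qbound (R : realType) m n (A : 'M[R]_(m, n)) tau (f : 'cV[R]_n -> R)
  (hi : 'I_n -> R -> \bar R) (L : R) (x : 'cV[R]_n) (qr : R) :
  (forall i, eproper (hi i) /\ econvex (hi i)) -> hsep hi x \is a fin_num -> 0 <= L ->
  (m < tau)%N -> (tau <= n)%N -> qr <= 0 ->
  (forall (bb : {set 'I_n}) dd, #|bb| = tau -> supp_sub dd bb -> A *m dd = 0 ->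
     (qr%:E <= Qmodel f hi L x dd)%E) ->
  forall d, A *m d = 0 -> ((((n - tau).+1)%:R * qr)%:E <= Qmodel f hi L x d)%E.
Proof.
move=> hp hx L0 mt tn q0 opt.
have small : forall d, A *m d = 0 -> (#|suppS d| <= tau)%N -> (qr%:E <= Qmodel f hi L x d)%E.
  move=> d Ad sd.
  have [B [SB cB]] := super_card sd (leq_trans tn (eq_leq (esym (card_ord n)))).
  apply: (opt B) => // i di; apply: (fintype.subsetP SB); by rewrite in_suppS.
have H : forall s d, (#|suppS d| <= s)%N -> A *m d = 0 ->
    ((((#|suppS d| - tau).+1)%:R * qr)%:E <= Qmodel f hi L x d)%E.
  elim=> [|s IH] d hs Ad.
    have sd : (#|suppS d| <= tau)%N by apply: leq_trans hs _.
    by rewrite (eqP (sd : (#|suppS d| - tau == 0)%N)) mul1r; apply: small.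
  have [sd|big] := leqP #|suppS d| tau.
    by rewrite (eqP (sd : (#|suppS d| - tau == 0)%N)) mul1r; apply: small.
  have [y [Ay [cy [yz lt]]]] := peel mt Ad big.
  have Az : A *m (d - y) = 0 by rewrite mulmxBr Ad Ay subr0.
  have := @Q_super R n f hi L x y (d - y) hp hx L0 yz; rewrite (_ : y + (d - y) = d); last by rewrite addrC subrK.
  move=> hQ.
  apply: le_trans hQ.
  have h1 := small y Ay cy.
  have h2 := IH (d - y) (leq_trans lt hs) Az.
  apply: le_trans (leeD h1 h2); rewrite -EFinD lee_fin.
  rewrite -[X in _ <= X + _]mul1r -mulrDl ler_wnM2r // -[1]/(1%:R) -natrD ler_nat.
  move: lt big; set a := #|suppS d|; set b := #|suppS (d - y)|; move=> lt big.
  rewrite add1n !ltnS; lia.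
move=> d Ad; apply: le_trans (H _ d (leqnn _) Ad).
rewrite lee_fin ler_wnM2r // ler_nat ltnS leq_sub2r //.
by apply: leq_trans (max_card _) _; rewrite card_ord.
Qed.

Lemma ext_PL (R : realType) (mu L fk N qk : R) (Fs iQ : \bar R) :
  0 < mu -> 0 < L -> (Fs <= fk%:E)%E -> ((N * qk)%:E <= iQ)%E -> (iQ <= 0)%E ->
  (mu%:E * (fk%:E - Fs) <= (- L)%:E * iQ)%E ->
  exists fs, Fs = fs%:E /\ mu * (fk - fs) <= - L * (N * qk).
Proof.
move=> mu0 L0; case: iQ => [iq| |] //=.
case: Fs => [fs| |] //= _.
  rewrite -EFinD -!EFinM !lee_fin => h1 h2 h3; exists fs; split => //.
  by apply: (le_trans h3); rewrite !mulNr lerN2 ler_pM2l.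
move=> _ _; rewrite addey // mulry gtr0_sg // mul1e => h.
by move: (le_lt_trans h (ltry _)); rewrite ltxx.
Qed.

Lemma seq_rate (R : realType) (e : nat -> R) (r : R) :
  (forall k, 0 <= e k) -> (forall k, e k.+1 <= r * e k) -> forall k, e k <= r ^+ k * e 0%N.
Proof.
move=> e0 he.
have [r0|r0] := leP 0 r.
  elim=> [|k IH]; first by rewrite expr0 mul1r.
  by apply: (le_trans (he k)); rewrite exprS -mulrA ler_wpM2l.
have z0 : e 0%N = 0.
  have h1 := he 0%N; have h2 := e0 1%N; have h3 := e0 0%N.
  have : r * e 0%N >= 0 by apply: le_trans h1.
  rewrite nmulr_rge0 // => h4; apply/eqP; rewrite eq_le h4 h3.
  by [].
case=> [|k]; first by rewrite expr0 mul1r.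
rewrite z0 mulr0; apply: (le_trans (he k)).
by rewrite nmulr_rle0.
Qed.

Lemma dotv0r (R : realType) n (u : 'cV[R]_n) : dotv u 0 = 0.
Proof. by rewrite /dotv big1 // => i _; rewrite mxE mulr0. Qed.

Lemma norm20 (R : realType) n : norm2 (0 : 'cV[R]_n) = 0.
Proof. by rewrite /norm2 big1 ?sqrtr0 // => i _; rewrite mxE expr0n. Qed.

Lemma Q0 (R : realType) n (f : 'cV[R]_n -> R) hi L (z : 'cV[R]_n) :
  hsep hi z \is a fin_num -> Qmodel f hi L z 0 = 0%E.
Proof.
move=> hz; rewrite /Qmodel dotv0r norm20 addr0 expr0n /= mulr0 addr0.
by rewrite add0e subee.
Qed.

Lemma FobjE (R : realType) n (f : 'cV[R]_n -> R) hi (z : 'cV[R]_n) :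
  hsep hi z \is a fin_num -> Fobj f hi z = (f z + fine (hsep hi z))%:E.
Proof. by move=> hz; rewrite /Fobj EFinD fineK. Qed.

Lemma step (R : realType) m n (A : 'M[R]_(m, n)) (c : 'cV[R]_m) (f : 'cV[R]_n -> R)
  (hi : 'I_n -> R -> \bar R) (L : R) tau (z dk : 'cV[R]_n) (bk : {set 'I_n}) :
  (forall w, differentiable f w) -> (forall i, eproper (hi i) /\ econvex (hi i)) ->
  0 < L -> (tau <= n)%N ->
  (forall z', A *m z' = c -> forall bb : {set 'I_n}, #|bb| = tau ->
     forall dd, supp_sub dd bb -> A *m dd = 0 ->
     norm2_on bb (grad f (z' + dd) - grad f z') <= L * norm2 dd) ->
  A *m z = c -> hsep hi z \is a fin_num ->
  #|bk| = tau -> supp_sub dk bk -> A *m dk = 0 ->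
  (forall (bb : {set 'I_n}) dd, #|bb| = tau -> supp_sub dd bb -> A *m dd = 0 ->
       (Qmodel f hi L z dk <= Qmodel f hi L z dd)%E) ->
  [/\ hsep hi (z + dk) \is a fin_num,
      Qmodel f hi L z dk = (fine (Qmodel f hi L z dk))%:E,
      fine (Qmodel f hi L z dk) <= 0 &
      f (z + dk) + fine (hsep hi (z + dk)) <=
        f z + fine (hsep hi z) + fine (Qmodel f hi L z dk)].
Proof.
move=> hdiff hp L0 tn hlip Az hz cbk sdk Adk opt.
have h1 : (#|@finset.set0 'I_n| <= tau)%N by rewrite cards0.
have h2 : (tau <= #|'I_n|)%N by rewrite card_ord.
have [B0 [_ cB0]] := super_card h1 h2.
have Qle0 : (Qmodel f hi L z dk <= 0)%E.
  rewrite -(Q0 f L hz); apply: (opt B0) => //; last by rewrite mulmx0.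
  by move=> i; rewrite mxE eqxx.
have hz' : hsep hi (z + dk) \is a fin_num.
  rewrite fin_numE hsep_Nninf //=; apply/negP => /eqP e.
  move: Qle0; rewrite /Qmodel e -(fineK hz) addey //= addye //.
have QE : Qmodel f hi L z dk =
    (dotv (grad f z) dk + L / 2 * norm2 dk ^+ 2 + fine (hsep hi (z + dk)) - fine (hsep hi z))%:E.
  by rewrite /Qmodel EFinB !EFinD !fineK.
have := @descent R n f L z dk bk hdiff L0 sdk.
have lipc : forall s, 0 < s -> s < 1 ->
    norm2_on bk (grad f (z + s *: dk) - grad f z) <= L * norm2 (s *: dk).
  move=> s _ _; apply: hlip => //.
    by move=> i; rewrite mxZ' mulf_eq0 negb_or => /andP [_ /sdk].
  by rewrite -scalemxAr Adk scaler0.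
move=> /(_ lipc) hd.
split => //; first by rewrite QE.
  by move: Qle0; rewrite QE /= lee_fin.
rewrite QE /=; lra.
Qed.

Unset Implicit Arguments. Set Strict Implicit.
Local Open Scope classical_set_scope.

Theorem propositionD2 (R : realType) (m n tau : nat)
  (A : 'M[R]_(m, n)) (c : 'cV[R]_m)
  (f : 'cV[R]_n -> R) (hi : 'I_n -> R -> \bar R) (L2 mu2 : R)
  (x : nat -> 'cV[R]_n) (b : nat -> {set 'I_n}) (d : nat -> 'cV[R]_n) :
  \rank A = m ->
  (m.+1 <= tau <= n)%N ->
  (forall z, differentiable f z) ->
  (forall i, eproper (hi i) /\ econvex (hi i)) ->
  0 < L2 ->
  (forall z, A *m z = c -> forall bb : {set 'I_n}, #|bb| = tau ->
     forall dd, supp_sub dd bb -> A *m dd = 0 ->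
     norm2_on bb (grad f (z + dd) - grad f z) <= L2 * norm2 dd) ->
  0 < mu2 ->
  (forall z, A *m z = c -> (hsep hi z < +oo)%E ->
     (mu2%:E * (Fobj f hi z - Fstar A c f hi)
       <= (- L2)%:E * ereal_inf [set Qmodel f hi L2 z dd | dd in [set dd | (A *m dd = 0)%R]])%E) ->
  A *m x 0%N = c ->
  (hsep hi (x 0%N) < +oo)%E ->
  (forall k, x k.+1 = x k + d k) ->
  (forall k, #|b k| = tau /\ supp_sub (d k) (b k) /\ A *m d k = 0 /\
     forall (bb : {set 'I_n}) dd, #|bb| = tau -> supp_sub dd bb -> A *m dd = 0 ->
       (Qmodel f hi L2 (x k) (d k) <= Qmodel f hi L2 (x k) dd)%E) ->
  forall k,
    (Fobj f hi (x k) - Fstar A c f hi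
      <= ((1 - mu2 / (L2 * ((n - tau).+1)%:R)) ^+ k)%:E
         * (Fobj f hi (x 0%N) - Fstar A c f hi))%E.
Proof.
move=> _ htau hdiff hp hL hlip hmu hPL hx0 hh0 hx hopt.
have /andP [mt tn] := htau.
have inv : forall k, A *m x k = c /\ hsep hi (x k) \is a fin_num.
  elim=> [|k [Ak hk]].
    by split => //; rewrite fin_numE hsep_Nninf //= (lt_eqF hh0).
  have [cb [sd [Ad o]]] := hopt k.
  have [h1 _ _ _] := @step R m n A c f hi L2 tau (x k) (d k) (b k) hdiff hp hL tn hlip Ak hk cb sd Ad o.
  by rewrite hx; split => //; rewrite mulmxDr Ak Ad addr0.
pose fr k := f (x k) + fine (hsep hi (x k)).
pose qk k := fine (Qmodel f hi L2 (x k) (d k)).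
pose N : R := ((n - tau).+1)%:R.
have N0 : 0 < N by rewrite ltr0n.
have stepk : forall k, fr k.+1 <= fr k + qk k /\ qk k <= 0 /\
    Qmodel f hi L2 (x k) (d k) = (qk k)%:E.
  move=> k; have [Ak hk] := inv k; have [cb [sd [Ad o]]] := hopt k.
  have [h1 h2 h3 h4] := @step R m n A c f hi L2 tau (x k) (d k) (b k) hdiff hp hL tn hlip Ak hk cb sd Ad o.
  by rewrite /fr hx.
have Fsle : forall k, (Fstar A c f hi <= (fr k)%:E)%E.
  move=> k; have [Ak hk] := inv k; rewrite /fr -FobjE //.
  by apply: ereal_inf_lbound; exists (x k).
have PLk : forall k, exists fs, Fstar A c f hi = fs%:E /\
    mu2 * (fr k - fs) <= - L2 * (N * qk k).
  move=> k; have [Ak hk] := inv k; have [_ [q0 QE]] := stepk k.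
  have hlt : (hsep hi (x k) < +oo)%E by rewrite ltey; case/andP: (hk : _ && _) => _ ->. 
  have := hPL (x k) Ak hlt; rewrite FobjE //.
  apply: ext_PL => //; first exact: Fsle.
    apply: le_ereal_inf_tmp => _ [dd Add <-].
    apply: (@Qbound R m n A tau f hi L2 (x k) (qk k) hp hk (ltW hL) mt tn q0) => //.
    have [_ [_ [_ o]]] := hopt k.
    by move=> bb dd' cb sd Ad; rewrite -QE; exact: (o bb dd' cb sd Ad).
  rewrite -(Q0 f L2 hk); apply: ereal_inf_lbound; exists 0 => //.
  by rewrite /= mulmx0.
have [fs [Fse _]] := PLk 0%N.
have key : forall k, mu2 * (fr k - fs) <= - L2 * (N * qk k).
  move=> k; have [fs' [Fse' h]] := PLk k.
  by move: Fse'; rewrite Fse => -[->].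
move=> k; have [_ h0] := inv 0%N; have [_ hk] := inv k.
rewrite !FobjE // Fse -!EFinB -EFinM lee_fin -/(fr k) -/(fr 0%N) -/N.
have LN : 0 < L2 * N by rewrite mulr_gt0.
apply: (@seq_rate R (fun k => fr k - fs)).
  by move=> j; rewrite subr_ge0 -lee_fin -Fse; exact: Fsle.
move=> j; have [s1 [s2 _]] := stepk j.
have hq : qk j <= - (mu2 / (L2 * N)) * (fr j - fs).
  rewrite -(ler_pM2r LN).
  have -> : qk j * (L2 * N) = - (- L2 * (N * qk j)) by ring.
  have -> : - (mu2 / (L2 * N)) * (fr j - fs) * (L2 * N) = - (mu2 * (fr j - fs)).
    by field; rewrite (gt_eqF hL) andbT addrC natr1 gt_eqF // ltr0n.

  by rewrite lerN2; exact: key.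
move: s1 hq; set a := mu2 / (L2 * N); set e := fr j - fs.
have -> : (1 - a) * e = e - a * e by ring.
rewrite mulNr /e; move=> s1 hq; lra.
Qed.
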